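(* Let $\Theta$ be a parameter set, let $B(p,\theta)$ and $L(p,\theta)$ be real-valued functions of a distribution $p$ and a parameter $\theta\in\Theta$, and for each $p$ let $\theta^*(p)\in\arg\min_{\theta\in\Theta}B(p,\theta)$. For $\rho_1,\rho_2\ge 0$ and $\eta\in[0,1)$ define $$\mathcal{G}_{\downarrow}(\rho_1,\eta)=\Big\{p:\ \sup_{r\le \frac{p}{1-\eta}} B(r,\theta^*(p))\le\rho_1\Big\},$$ $$\mathcal{G}_{\uparrow}(\rho_1,\rho_2,\eta)=\Big\{p:\ \text{for all }\theta\in\Theta \text{ and all } r\le\tfrac{p}{1-\eta},\ \big(B(r,\theta)\le\rho_1\Rightarrow L(p,\theta)\le\rho_2\big)\Big\},$$ and $\mathcal{G}^{\mathsf{TV}}(\rho_1,\rho_2,\eta)=\mathcal{G}_{\downarrow}(\rho_1,\eta)\cap\mathcal{G}_{\uparrow}(\rho_1,\rho_2,\eta)$. If $2\epsilon\le\eta<1$, then $$\sup_{p_1,p_2\in\mathcal{G}^{\mathsf{TV}}(\rho_1,\rho_2,\eta):\ \mathsf{TV}(p_1,p_2)\le 2\epsilon} L(p_1,\theta^*(p_2))\le\rho_2 .$$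
   Context: For distributions $r,p$ and $\eta\in[0,1)$, $r\le \frac{p}{1-\eta}$ means $r$ is a probability distribution with $r(A)\le p(A)/(1-\eta)$ for all measurable $A$. $\mathsf{TV}(p,q)=\sup_A|p(A)-q(A)|$. The left-hand side of the conclusion is called the modulus of continuity of $\mathcal{G}^{\mathsf{TV}}(\rho_1,\rho_2,\eta)$ at level $2\epsilon$ under $\mathsf{TV}$ and loss $L$. *)

(* Defs.v *)
From mathcomp Require Import all_boot all_order all_algebra.
From mathcomp Require Import all_classical all_reals all_analysis.
Import Order.TTheory GRing.Theory Num.Theory.
Local Open Scope classical_set_scope.
Local Open Scope ring_scope.

Section Defs.
Context {d : measure_display} {T : measurableType d} {R : realType}.

Definition dominated_by (eta : R) (r p : probability T R) : Prop :=
  forall A, measurable A -> (r A <= p A * ((1 - eta)^-1)%:E)%E.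

Definition TV (p q : probability T R) : \bar R :=
  ereal_sup [set x | exists A, measurable A /\ x = `|(p A - q A)%E|%E].

Context {Theta : Type}.
Variables (B L : probability T R -> Theta -> R)
          (theta_star : probability T R -> Theta).

Definition G_down (rho1 eta : R) : set (probability T R) :=
  [set p | (ereal_sup [set x | exists r, dominated_by eta r p /\
                                   x = (B r (theta_star p))%:E]
             <= rho1%:E)%E].

Definition G_up (rho1 rho2 eta : R) : set (probability T R) :=
  [set p | forall (theta : Theta) (r : probability T R),
       dominated_by eta r p -> B r theta <= rho1 -> L p theta <= rho2].

Definition G_TV (rho1 rho2 eta : R) : set (probability T R) :=
  G_down rho1 eta `&` G_up rho1 rho2 eta.

End Defs.

(* Main.v *)
Require Import Defs.
From mathcomp Require Import all_boot all_order all_algebra.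
From mathcomp Require Import all_classical all_reals all_analysis.
From mathcomp Require Import lra.
Import Order.TTheory GRing.Theory Num.Theory.
Local Open Scope classical_set_scope.
Local Open Scope ring_scope.

Section aux.
Context (d : measure_display) (T : measurableType d) (R : realType).

Lemma probE (p : probability T R) A : measurable A -> p A = (fine (p A))%:E.
Proof. by move=> mA; rewrite fineK // fin_num_measure. Qed.
Arguments probE {p A}.

Lemma dom_of (p q : probability T R) (m : {measure set T -> \bar R}) (eta c : R) :
  0 < 1 - eta -> 1 - eta <= c ->
  (forall A, measurable A -> (m A <= p A)%E) -> m setT = c%:E ->
  Defs.dominated_by eta (mnormalize m q : probability T R) p.
Proof.
move=> he hc hmp mT A mA.
have c0 : 0 < c by apply: lt_le_trans hc.
have mnE : mnormalize m q A = (m A * (c^-1)%:E)%E.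
  rewrite /mnormalize mT ifF //.
  by apply/negbTE; rewrite negb_or eqe gt_eqF.
rewrite [X in (X <= _)%E]mnE.
have fmA : m A \is a fin_num.
  rewrite ge0_fin_numE ?measure_ge0 //; apply: le_lt_trans (hmp A mA) _.
  by rewrite (probE mA) ltry.
rewrite -(fineK fmA) (probE mA) -!EFinM lee_fin.
have ha : 0 <= fine (m A) by rewrite fine_ge0 ?measure_ge0.
have hab : fine (m A) <= fine (p A).
  by rewrite -lee_fin (fineK fmA) -probE // hmp.
apply: le_trans (_ : fine (p A) * c^-1 <= _).
  by rewrite ler_wpM2r // invr_ge0 ltW.
rewrite ler_wpM2l //; first by apply: le_trans hab.
by rewrite lef_pV2 // posrE.
Qed.

Lemma min_exists (p1 p2 : probability T R) (eta : R) :
  eta < 1 -> (Defs.TV p1 p2 <= eta%:E)%E ->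
  exists r : probability T R,
    Defs.dominated_by eta r p1 /\ Defs.dominated_by eta r p2.
Proof.
move=> eta1 hTV.
pose nu := cadd (charge_of_finite_measure p1) (copp (charge_of_finite_measure p2)).
have [P [N [[mP posP] [mN negN] PNT PN0]]] := Hahn_decomposition nu.
pose m := measure_add (mrestr p1 mN) (mrestr p2 mP).
have mE A : m A = (p1 (A `&` N) + p2 (A `&` P))%E by rewrite /m measure_addE.
have splitA (q : probability T R) A : measurable A ->
    q A = (q (A `&` N) + q (A `&` P))%E.
  move=> mA; rewrite -measureU; first last.
  - by rewrite setIACA (setIC N) PN0 setI0.
  - exact: measurableI.
  - exact: measurableI.
  by rewrite -setIUr setUC PNT setIT.
have nuE X : nu X = (p1 X - p2 X)%E by [].
have le1 A : measurable A -> (m A <= p1 A)%E.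
  move=> mA; rewrite mE (splitA p1 A mA).
  have : (0 <= p1 (A `&` P) - p2 (A `&` P))%E.
    by rewrite -nuE; apply: posP (measurableI _ _ mA mP) (@subIsetr _ _ _).
  rewrite (probE (p:=p1) (measurableI _ _ mA mP)) (probE (p:=p2) (measurableI _ _ mA mP)).
  rewrite (probE (p:=p1) (measurableI _ _ mA mN)).
  rewrite -EFinB -!EFinD !lee_fin; lra.
have le2 A : measurable A -> (m A <= p2 A)%E.
  move=> mA; rewrite mE (splitA p2 A mA).
  have : (p1 (A `&` N) - p2 (A `&` N) <= 0)%E.
    by rewrite -nuE; apply: negN (measurableI _ _ mA mN) (@subIsetr _ _ _).
  rewrite (probE (p:=p2) (measurableI _ _ mA mP)).
  rewrite (probE (p:=p1) (measurableI _ _ mA mN)) (probE (p:=p2) (measurableI _ _ mA mN)).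
  rewrite -EFinB -!EFinD !lee_fin; lra.
have hP1 := splitA p1 setT measurableT.
rewrite probability_setT !setTI in hP1.
have hT : m setT = (fine (p1 N) + fine (p2 P))%:E.
  by rewrite mE !setTI (probE (p:=p1) mN) (probE (p:=p2) mP).
have hTVP : (`|p1 P - p2 P| <= eta%:E)%E.
  apply: le_trans hTV; apply: ereal_sup_ubound; by exists P.
move: hP1 hTVP; rewrite (probE (p:=p1) mN) (probE (p:=p1) mP) (probE (p:=p2) mP).
rewrite -EFinB -EFinD => /eqP; rewrite eqe => /eqP h1; rewrite lee_fin => h2.
have h3 := ler_norm (fine (p1 P) - fine (p2 P)).
have he : 0 < 1 - eta by lra.
have hc : 1 - eta <= fine (p1 N) + fine (p2 P) by lra.
by exists (mnormalize m p1); split; [apply: (dom_of _ _ _ _ _ he hc le1 hT) | apply: (dom_of _ _ _ _ _ he hc le2 hT)].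
Qed.

End aux.

Theorem theorem3p3 (d : measure_display) (T : measurableType d) (R : realType)
  (Theta : Type) (B L : probability T R -> Theta -> R)
  (theta_star : probability T R -> Theta)
  (Hargmin : forall (p : probability T R) (theta : Theta),
      B p (theta_star p) <= B p theta)
  (rho1 rho2 eta eps : R)
  (Hrho1 : 0 <= rho1) (Hrho2 : 0 <= rho2)
  (Heta0 : 0 <= eta) (Heps : 2 * eps <= eta) (Heta1 : eta < 1) :
  (ereal_sup [set x | exists p1 p2 : probability T R,
      [/\ G_TV B L theta_star rho1 rho2 eta p1,
          G_TV B L theta_star rho1 rho2 eta p2,
          (TV p1 p2 <= (2 * eps)%:E)%E &
          x = (L p1 (theta_star p2))%:E]]
   <= rho2%:E)%E.
Proof.
apply: ub_ereal_sup => x [p1 [p2 [[G1d G1u] [G2d G2u] Htv ->]]].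
have hTV : (Defs.TV p1 p2 <= eta%:E)%E.
  by apply: le_trans Htv _; rewrite lee_fin.
have [r [r1 r2]] := (@min_exists d T R p1 p2 eta Heta1 hTV).
rewrite lee_fin; apply: (G1u (theta_star p2) r r1).
rewrite -lee_fin; apply: le_trans G2d.
by apply: ereal_sup_ubound; exists r.
Qed.
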